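(* For every finite hyperplane arrangement $A$ in $\mathbb{R}^d$ and every $q\in\mathbb{R}^d$, $\mathrm{HTvD}(A,q)\ge \frac{1}{d}\mathrm{RD}(A,q)$.
   Context: Regression depth $\mathrm{RD}(A,q)$: the minimum, over all closed rays emanating from $q$, of the number of hyperplanes of $A$ intersected by or parallel to the ray (a hyperplane containing $q$ counts for every ray). Hyperplane Tverberg depth $\mathrm{HTvD}(A,q)$: the maximum $r$ such that $A$ can be partitioned into $r$ parts with $\mathrm{RD}(\text{part},q)\ge 1$ for each part. *)

(* Defs.v *)
From mathcomp Require Import all_boot all_order all_algebra.
From mathcomp Require Import boolp reals.
Set Implicit Arguments. Unset Strict Implicit. Unset Printing Implicit Defensive.
Import Order.TTheory GRing.Theory Num.Theory.
Local Open Scope ring_scope.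

Section Depth.
Variables (R : realType) (d : nat).

Definition dotv (u v : 'rV[R]_d) : R := \sum_(i < d) u 0 i * v 0 i.

(* A hyperplane is given by a pair (a, b) with a <> 0 : { x | a.x = b }. *)
Definition hyperplane := ('rV[R]_d * R)%type.

Definition on_hp (H : hyperplane) (x : 'rV[R]_d) : Prop := dotv H.1 x = H.2.

Definition ray_hits (H : hyperplane) (q v : 'rV[R]_d) : Prop :=
  (exists t : R, 0 <= t /\ on_hp H (q + t *: v)) \/ dotv H.1 v = 0.

Variable n : nat.
Variable A : 'I_n -> hyperplane.

Definition ray_count (P : {set 'I_n}) (q v : 'rV[R]_d) : nat :=
  #|[set i in P | `[< ray_hits (A i) q v >] ]|.

(* All counts are <= n, so the
   minimum over achieved values k <= n is the minimum over rays. *)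
Definition RD (P : {set 'I_n}) (q : 'rV[R]_d) : nat :=
  \big[minn/n]_(k < n.+1 |
     `[< exists v : 'rV[R]_d, v != 0 /\ ray_count P q v = k >]) k.

(* Hyperplane Tverberg depth: the largest r such that the arrangement can be
   partitioned into r parts (given by a labelling f : 'I_n -> 'I_r) each of
   regression depth >= 1.  Parts of depth >= 1 are nonempty, so r <= n. *)
Definition HTvD (q : 'rV[R]_d) : nat :=
  \big[maxn/0%N]_(r < n.+1 |
     `[< exists f : 'I_n -> 'I_r,
           forall j : 'I_r, (1 <= RD [set i | f i == j] q)%N >]) r.

End Depth.

(* Main.v *)
Require Import Defs.
From mathcomp Require Import all_boot all_order all_algebra.
From mathcomp Require Import boolp reals ring lra zify.
Import Order.TTheory GRing.Theory Num.Theory.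
Local Open Scope ring_scope.

Lemma dotvC (R : realType) d (u v : 'rV[R]_d) : dotv u v = dotv v u.
Proof. by rewrite /dotv; apply: eq_bigr => i _; rewrite mulrC. Qed.

Lemma dotvDl (R : realType) d (u u' v : 'rV[R]_d) :
  dotv (u + u') v = dotv u v + dotv u' v.
Proof. by rewrite /dotv -big_split; apply: eq_bigr => i _; rewrite mxE mulrDl. Qed.

Lemma dotvZl (R : realType) d c (u v : 'rV[R]_d) :
  dotv (c *: u) v = c * dotv u v.
Proof. by rewrite /dotv mulr_sumr; apply: eq_bigr => i _; rewrite mxE mulrA. Qed.

Lemma dotvNl (R : realType) d (u v : 'rV[R]_d) : dotv (- u) v = - dotv u v.
Proof. by rewrite -scaleN1r dotvZl mulN1r. Qed.

Lemma dotvBl (R : realType) d (u u' v : 'rV[R]_d) :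
  dotv (u - u') v = dotv u v - dotv u' v.
Proof. by rewrite dotvDl dotvNl. Qed.

Lemma dotv0l (R : realType) d (v : 'rV[R]_d) : dotv 0 v = 0.
Proof. by rewrite /dotv big1 // => i _; rewrite mxE mul0r. Qed.

Lemma dotvDr (R : realType) d (u v v' : 'rV[R]_d) :
  dotv u (v + v') = dotv u v + dotv u v'.
Proof. by rewrite dotvC dotvDl !(dotvC _ _ u). Qed.
Lemma dotvZr (R : realType) d c (u v : 'rV[R]_d) :
  dotv u (c *: v) = c * dotv u v.
Proof. by rewrite dotvC dotvZl dotvC. Qed.
Lemma dotvBr (R : realType) d (u v v' : 'rV[R]_d) :
  dotv u (v - v') = dotv u v - dotv u v'.
Proof. by rewrite dotvC dotvBl !(dotvC _ _ u). Qed.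

Lemma dotv_suml (R : realType) d (I : finType) (P : pred I) (c : I -> R)
  (x : I -> 'rV[R]_d) v :
  dotv (\sum_(i | P i) c i *: x i) v = \sum_(i | P i) c i * dotv (x i) v.
Proof.
elim/big_rec2: _ => [|i y1 y2 _ <-]; first by rewrite dotv0l.
by rewrite dotvDl dotvZl.
Qed.

Lemma dotv_gt0 (R : realType) d (v : 'rV[R]_d) : v != 0 -> 0 < dotv v v.
Proof.
move=> nz; rewrite lt_def sumr_ge0 ?andbT; last by move=> i _; rewrite -expr2 sqr_ge0.
apply: contra nz => /eqP /psumr_eq0P H; apply/eqP/rowP => i.
have H' := H (fun i _ => (sqr_ge0 (v 0 i))).
rewrite mxE; have := H' i isT; rewrite -expr2 => /eqP.
by rewrite sqrf_eq0 => /eqP.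
Qed.

Definition wv {R : realType} {d} (H : hyperplane R d) (q : 'rV[R]_d) : 'rV[R]_d :=
  (H.2 - dotv H.1 q) *: H.1.

Lemma ray_hitsE (R : realType) d (H : hyperplane R d) q v :
  ray_hits H q v <-> 0 <= dotv (wv H q) v.
Proof.
rewrite /ray_hits /on_hp /wv dotvZl; set c := H.2 - dotv H.1 q; set a := dotv H.1 v.
split.
- case=> [[t [t0]]|a0].
  + rewrite dotvDr dotvZr => e.
    have -> : c = t * a by rewrite /c -e /a addrC addKr.
    by rewrite -mulrA mulr_ge0 // -expr2 sqr_ge0.
  + by rewrite -/a a0 mulr0.
- move=> h; have [a0|a0] := eqVneq a 0; first by right.
  left; exists (c / a); split.
  + have : 0 <= c * a / (a * a) by rewrite divr_ge0 // -expr2 sqr_ge0.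
    by rewrite invfM mulrA mulfK.
  + by rewrite dotvDr dotvZr -/a mulfVK // /c addrC subrK.
Qed.

Definition NNR {R : realType} {d n} (S : {set 'I_n}) (w : 'I_n -> 'rV[R]_d) : Prop :=
  exists lam : 'I_n -> R, (forall i, i \in S -> 0 <= lam i) /\
    (exists2 i, i \in S & lam i != 0) /\ \sum_(i in S) lam i *: w i = 0.

Lemma gordan (R : realType) d n (k : nat) : forall (S : {set 'I_n}) (w : 'I_n -> 'rV[R]_d),
  #|S| = k -> NNR S w \/ exists v, forall i, i \in S -> dotv (w i) v < 0.
Proof.
elim: k => [|k IH] S w cS.
  by right; exists 0 => i; rewrite (cards0_eq cS) inE.
have /card_gt0P [m mS] : (0 < #|S|)%N by rewrite cS.
have cS' : #|S :\ m| = k by rewrite (cardsD1 m S) mS in cS; case: cS.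
case: (IH (S :\ m) w cS') => [[lam [l0 [[i iS li] ls]]]|[v hv]].
  left; exists (fun i => if i == m then 0 else lam i); split; [|split].
  - by move=> j jS; case: eqP => [//|jm]; apply: l0; rewrite !inE jS andbT; apply/eqP.
  - exists i; first by move: iS; rewrite !inE => /andP[].
    by move: iS; rewrite !inE => /andP[/negbTE -> _].
  - rewrite (big_setD1 m mS) /= eqxx scale0r add0r; rewrite -[RHS]ls.
    by apply: eq_bigr => j; rewrite !inE => /andP[/negbTE -> _].
have [am|am] := ltP (dotv (w m) v) 0.
  by right; exists v => i iS; have [->//|im] := eqVneq i m; apply: hv; rewrite !inE im.
have [wm0|wmn0] := eqVneq (w m) 0.
  left; exists (fun i => if i == m then 1 else 0); split; [|split].
  - by move=> j _; case: eqP.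
  - by exists m; rewrite ?eqxx ?oner_neq0.
  - rewrite (big_setD1 m mS) /= eqxx scale1r wm0 add0r big1 // => j.
    by rewrite !inE => /andP[/negbTE -> _]; rewrite scale0r.
set a := dotv (w m) v.
pose u i := a *: w i - (dotv (w i) v) *: w m.
case: (IH (S :\ m) u cS') => [[mu [m0 [[i iS mi] ms]]]|[v' hv']].
  left; exists (fun i => if i == m then \sum_(j in S :\ m) mu j * (- dotv (w j) v) else a * mu i).
  have pos : 0 < \sum_(j in S :\ m) mu j * (- dotv (w j) v).
    rewrite (big_setD1 i iS) /=.
    have h1 : 0 < mu i * - dotv (w i) v.
      rewrite mulr_gt0 // ?oppr_gt0; last by apply: hv.
      by rewrite lt_def mi m0.
    have h2 : 0 <= \sum_(j in S :\ m :\ i) mu j * - dotv (w j) v.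
      apply: sumr_ge0 => j; rewrite !inE => /andP[_ /andP[jm jS]].
      rewrite mulr_ge0 // ?m0 ?inE ?jS ?jm ?andbT //.
      by rewrite oppr_ge0 ltW // hv // !inE jS jm.
    lra.
  split; [|split].
  - move=> j jS; case: eqP => jm; first exact: ltW.
    by rewrite mulr_ge0 // m0 // !inE jS andbT; apply/eqP.
  - by exists m; rewrite // eqxx gt_eqF.
  have e : \sum_(j in S :\ m) (a * mu j) *: w j =
           (\sum_(j in S :\ m) mu j * dotv (w j) v) *: w m.
    apply/eqP; rewrite scaler_suml -subr_eq0 -sumrB -[X in _ == X]ms; apply/eqP.
    by apply: eq_bigr => j _; rewrite /u scalerBr !scalerA [a * _]mulrC.
  rewrite (big_setD1 m mS) /= eqxx.
  rewrite (eq_bigr (fun j => (a * mu j) *: w j)); last first.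
    by move=> j; rewrite !inE => /andP[/negbTE -> _].
  rewrite e -scalerDl -big_split /= big1 ?scale0r // => j _.
  by rewrite -mulrDr addNr mulr0.
right.
pose v2 := a *: v' - dotv (w m) v' *: v.
have h2 : forall i, dotv (w i) v2 = dotv (u i) v'.
  by move=> i; rewrite /v2 /u dotvBr !dotvZr dotvBl !dotvZl -/a; ring.
have hm : dotv (w m) v2 = 0.
  by rewrite /v2 dotvBr !dotvZr -/a mulrC subrr.
pose K := 1 + \sum_(j in S :\ m) `|dotv (w j) (w m)| / (- dotv (w j) v2).
exists (K *: v2 - w m) => i iS.
rewrite dotvBr dotvZr.
have [->|im] := eqVneq i m.
  by rewrite hm mulr0 sub0r oppr_lt0 dotv_gt0.
have iS' : i \in S :\ m by rewrite !inE im.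
have c0 : dotv (w i) v2 < 0 by rewrite h2 hv'.
set c := dotv (w i) v2; set b := dotv (w i) (w m).
have ht : `|b| / (- c) * (- c) = `|b| by rewrite mulfVK // oppr_eq0 lt_eqF.
have tK : 1 + `|b| / (- c) <= K.
  rewrite /K lerD2l (big_setD1 i iS') /= lerDl sumr_ge0 // => j.
  rewrite !inE => /andP[_ /andP[jm jS]].
  by rewrite divr_ge0 // oppr_ge0 ltW // h2 hv' // !inE jm.
have nb : - `|b| <= b by exact: (lerNnormlW (lexx _)).
have hK : 0 <= (K - (1 + `|b| / (- c))) * (- c).
  by rewrite mulr_ge0 // ?subr_ge0 // oppr_ge0 ltW.
move: hK ht tK nb c0; generalize (`|b| / - c) => t; generalize `|b| => nb'.
move=> hK ht tK nb c0.
have e1 : K * c = - ((K - (1 + t)) * - c) - t * (- c) + c by ring.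
rewrite e1 ht; move: hK c0; rewrite -/c; generalize ((K - (1 + t)) * - c) => p; clearbody c; move=> hK c0; lra.
Qed.

Lemma dep (R : realType) d n (S : {set 'I_n}) (x : 'I_n -> 'rV[R]_d) :
  (d < #|S|)%N -> exists mu : 'I_n -> R, (forall i, i \notin S -> mu i = 0) /\
    (exists2 i, i \in S & mu i != 0) /\ \sum_(i in S) mu i *: x i = 0.
Proof.
move=> hS.
have /card_gt0P [i0 i0S] : (0 < #|S|)%N by apply: leq_ltn_trans hS.
pose X : 'M[R]_(#|S|, d) := \matrix_(j, k) x (enum_val j) 0 k.
have nf : ~~ row_free X.
  by rewrite /row_free neq_ltn (leq_ltn_trans (rank_leq_col X) hS).
have : kermx X != 0 by rewrite kermx_eq0.
have [j0 /eqP nz|allz] := pickP (fun j => row j (kermx X) != 0); last first.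
  case/negP; apply/eqP/row_matrixP => j; rewrite row0; exact/eqP/negbFE/allz.
move=> _; set u := row j0 (kermx X) in nz.
have uX : u *m X = 0 by apply/sub_kermxP; rewrite row_sub.
have [k0 uk] : exists k, u 0 k != 0.
  case: (boolP [exists k, u 0 k != 0]) => [/existsP//|/existsPn H].
  case: nz; apply/rowP => k.
  by move: (H k); rewrite negbK [RHS]mxE => /eqP.
exists (fun i => if i \in S then u 0 (enum_rank_in i0S i) else 0); split; [|split].
- by move=> i /negbTE ->.
- exists (enum_val k0); first exact: enum_valP.
  by rewrite enum_valP enum_valK_in.
- rewrite big_enum_val /=.
  transitivity (u *m X); last exact: uX.
  rewrite mulmx_sum_row; apply: eq_bigr => j _.
  rewrite enum_valP enum_valK_in; congr (_ *: _).
  by apply/rowP => k; rewrite !mxE.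
Qed.

Lemma exmax (R : realType) n (T : {set 'I_n}) (f : 'I_n -> R) i0 : i0 \in T ->
  exists2 t, t \in T & forall s, s \in T -> f s <= f t.
Proof.
move=> i0T; case: (@arg_maxP _ R _ i0 (mem T) f i0T) => t tT H.
by exists t => // s sT; apply: H.
Qed.

Lemma red_pos (R : realType) d n (T : {set 'I_n}) (w : 'I_n -> 'rV[R]_d)
  (lam mu : 'I_n -> R) (t0 i0 : 'I_n) :
  (forall t, t \in T -> 0 < lam t) -> \sum_(t in T) lam t *: w t = 0 ->
  t0 \in T -> mu t0 = 0 -> i0 \in T -> 0 < mu i0 ->
  \sum_(t in T) mu t *: w t = 0 ->
  exists2 T' : {set 'I_n}, T' \proper T & NNR T' w.
Proof.
move=> lp ls t0T mt0 i0T mi0 ms.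
have [ts tsT tsmax] := @exmax R n T (fun t => mu t / lam t) i0 i0T.
set rho := mu ts / lam ts in tsmax.
have rp : 0 < rho.
  apply: lt_le_trans (tsmax _ i0T); rewrite divr_gt0 //; exact: lp.
have mts : 0 < mu ts.
  by move: rp; rewrite /rho pmulr_lgt0 // invr_gt0 lp.
have t0ts : t0 != ts by apply/eqP => e; move: mts; rewrite -e mt0 ltxx.
exists (T :\ ts).
  by rewrite properD1.
exists (fun t => lam t - mu t / rho); split; [|split].
- move=> t; rewrite !inE => /andP[_ tT].
  rewrite subr_ge0 ler_pdivrMr // mulrC -ler_pdivrMr ?lp //; exact: tsmax.
- exists t0; first by rewrite !inE t0ts.
  by rewrite mt0 mul0r subr0 gt_eqF ?lp.
- have e0 : lam ts - mu ts / rho = 0.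
    by rewrite /rho invf_div mulrA mulrAC mulfV ?gt_eqF // mul1r subrr.
  have := @big_setD1 _ 0 +%R _ ts T (fun t => (lam t - mu t / rho) *: w t) tsT.
  rewrite /= e0 scale0r add0r => <-.
  rewrite (eq_bigr (fun t => lam t *: w t - rho^-1 *: (mu t *: w t))); last first.
    by move=> t _; rewrite scalerBl scalerA mulrC.
  by rewrite sumrB -scaler_sumr ls ms scaler0 subrr.
Qed.

Lemma red (R : realType) d n (T : {set 'I_n}) (w : 'I_n -> 'rV[R]_d)
  (lam mu : 'I_n -> R) (t0 : 'I_n) :
  (forall t, t \in T -> 0 < lam t) -> \sum_(t in T) lam t *: w t = 0 ->
  t0 \in T -> mu t0 = 0 -> (exists2 i, i \in T & mu i != 0) ->
  \sum_(t in T) mu t *: w t = 0 ->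
  exists2 T' : {set 'I_n}, T' \proper T & NNR T' w.
Proof.
move=> lp ls t0T mt0 [i iT mi] ms.
have [mp|mn] := ltP 0 (mu i).
  exact: (@red_pos R d n T w lam mu t0 i lp ls t0T mt0 iT mp ms).
apply: (@red_pos R d n T w lam (fun t => - mu t) t0 i) => //.
- by rewrite mt0 oppr0.
- by rewrite oppr_gt0 lt_neqAle mi mn.
- by rewrite (eq_bigr (fun t => - (mu t *: w t))) ?sumrN ?ms ?oppr0 // => t _; rewrite scaleNr.
Qed.

Lemma extract (R : realType) d n (P : {set 'I_n}) (w : 'I_n -> 'rV[R]_d) :
  NNR P w -> exists T : {set 'I_n}, [/\ T \subset P, NNR T w &
    forall v, v != 0 -> (#|[set t in T | (0 <= dotv (w t) v)%R]| <= d)%N].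
Proof.
move=> NP.
pose Q := fun T : {set 'I_n} => (T \subset P) && `[< NNR T w >].
have QP : Q P by rewrite /Q subxx; apply/asboolP.
case: (@arg_minnP _ P Q (fun T : {set 'I_n} => #|T|) QP) => T /andP[TP /asboolP NT] Tmin.
have noprop : forall T' : {set 'I_n}, T' \proper T -> ~ NNR T' w.
  move=> T' pT NT'.
  have : (#|T| <= #|T'|)%N.
    apply: Tmin; rewrite /Q (subset_trans (proper_sub pT) TP) /=; exact/asboolP.
  by rewrite leqNgt proper_card.
case: NT => lam [l0 [[i0 i0T li0] ls]].
have lp : forall t, t \in T -> 0 < lam t.
  move=> t tT; rewrite lt_def l0 // andbT; apply/negP => /eqP lt0.
  apply: (noprop (T :\ t)); first by rewrite properD1.
  exists lam; split; [|split].
  - by move=> j; rewrite !inE => /andP[_]; apply: l0.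
  - exists i0 => //; rewrite !inE i0T andbT; apply/eqP => e; by move: li0; rewrite e lt0 eqxx.
  - by move: ls; rewrite (big_setD1 t tT) /= lt0 scale0r add0r.
exists T; split => //; first by exists lam; split; [|split; [exists i0|]].
move=> v vnz; rewrite leqNgt; apply/negP => hU.
set U := [set t in T | (0 <= dotv (w t) v)%R] in hU.
have UT : U \subset T by apply/subsetP => t; rewrite inE => /andP[].
have /card_gt0P [t0 t0U] : (0 < #|U|)%N by apply: leq_ltn_trans hU.
have t0T : t0 \in T by apply: (subsetP UT).
have [big|small] := ltnP d #|T :\ t0|.
  have [mu [ms0 [[i iT mi] msum]]] := @dep R d n (T :\ t0) w big.
  have mt0 : mu t0 = 0 by apply: ms0; rewrite !inE eqxx.
  have iT' : i \in T by move: iT; rewrite !inE => /andP[].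
  have msT : \sum_(t in T) mu t *: w t = 0.
    by rewrite (big_setD1 t0 t0T) /= mt0 scale0r add0r.
  have [T' pT' NT'] := @red R d n T w lam mu t0 lp ls t0T mt0 (ex_intro2 _ _ i iT' mi) msT.
  exact: noprop pT' NT'.
have cT : #|T| = (#|T :\ t0|).+1 by rewrite (cardsD1 t0 T) t0T.
have cUT : #|U| = #|T|.
  by apply/eqP; rewrite eqn_leq subset_leq_card //= cT (leq_trans _ hU).
have UeT : U = T by apply/eqP; rewrite eqEcard UT cUT leqnn.
have pos : forall t, t \in T -> 0 <= dotv (w t) v.
  by move=> t; rewrite -{1}UeT inE => /andP[].
have s0 : \sum_(t in T) lam t * dotv (w t) v = 0 by rewrite -dotv_suml ls dotv0l.
have dot0 : forall t, t \in T -> dotv (w t) v = 0.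
  move=> t tT.
  have := psumr_eq0P (fun t tT => mulr_ge0 (ltW (lp t tT)) (pos t tT)) s0 tT.
  move=> /eqP.
  by rewrite mulf_eq0 gt_eqF ?lp //= => /eqP.
pose x := fun i => if i == t0 then v else w i.
have bigT : (d < #|T|)%N by rewrite -cUT.
have [mu [_ [[i iT mi] msum]]] := @dep R d n T x bigT.
have mt0 : mu t0 = 0.
  have := congr1 (fun z => dotv z v) msum; rewrite /= dotv_suml dotv0l.
  rewrite (big_setD1 t0 t0T) /= /x eqxx big1; last first.
    by move=> t; rewrite !inE => /andP[/negbTE -> tT]; rewrite dot0 // mulr0.
  by rewrite addr0 => /eqP; rewrite mulf_eq0 (gt_eqF (dotv_gt0 _ _ _ vnz)) orbF => /eqP.
have msT : \sum_(t in T) mu t *: w t = 0.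
  rewrite -[RHS]msum; apply: eq_bigr => t _; rewrite /x; case: eqP => // ->.
  by rewrite mt0 !scale0r.
have [T' pT' NT'] := @red R d n T w lam mu t0 lp ls t0T mt0 (ex_intro2 _ _ i iT mi) msT.
exact: noprop pT' NT'.
Qed.


Definition cnt {R : realType} {d n} (P : {set 'I_n}) (w : 'I_n -> 'rV[R]_d) v :=
  #|[set i in P | (0 <= dotv (w i) v)%R]|.

Lemma cnt_sub (R : realType) d n (P P' : {set 'I_n}) (w : 'I_n -> 'rV[R]_d) v :
  P \subset P' -> (cnt P w v <= cnt P' w v)%N.
Proof.
move=> sP; apply: subset_leq_card; apply/subsetP => i; rewrite !inE => /andP[iP ->].
by rewrite (subsetP sP).
Qed.

Lemma nnr_good (R : realType) d n (T : {set 'I_n}) (w : 'I_n -> 'rV[R]_d) v :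
  NNR T w -> (0 < cnt T w v)%N.
Proof.
case=> lam [l0 [[i0 i0T li0] ls]]; rewrite lt0n; apply/negP => /eqP /cards0_eq e.
have neg : forall t, t \in T -> dotv (w t) v < 0.
  move=> t tT; rewrite ltNge; apply/negP => h.
  by have := in_set0 t; rewrite -e inE tT h.
have := congr1 (fun z => dotv z v) ls; rewrite /= dotv_suml dotv0l.
rewrite (big_setD1 i0 i0T) /=.
have h1 : lam i0 * dotv (w i0) v < 0.
  by rewrite pmulr_rlt0 ?neg // lt_def li0 l0.
have h2 : \sum_(i in T :\ i0) lam i * dotv (w i) v <= 0.
  apply: sumr_le0 => i; rewrite !inE => /andP[_ iT].
  by apply: mulr_ge0_le0; [apply: l0 | apply: ltW; apply: neg].
lra.
Qed.

Lemma greedy (R : realType) d n (hd : (0 < d)%N) (w : 'I_n -> 'rV[R]_d) (r : nat) :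
  forall P : {set 'I_n}, (forall v, v != 0 -> (r * d < cnt P w v)%N) ->
  exists g : 'I_n -> 'I_r.+1, forall j v, v != 0 ->
    (0 < cnt (P :&: [set i | g i == j]) w v)%N.
Proof.
elim: r => [|r IH] P hP.
  exists (fun _ => ord0) => j v vnz; rewrite (_ : P :&: _ = P) ?hP //.
  by apply/setP => i; rewrite !inE (ord1 j) eqxx andbT.
have NP : NNR P w.
  pose v1 : 'rV[R]_d := const_mx 1.
  have v1nz : v1 != 0.
    by apply/eqP => /rowP /(_ (Ordinal hd)); rewrite !mxE => /eqP; rewrite oner_eq0.
  case: (@gordan R d n #|P| P w erefl) => // [[v hv]].
  have [v0|vnz] := eqVneq v 0.
    have Pe : P = set0.
      apply/setP => i; rewrite inE; apply/negP => iP.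
      by have := hv i iP; rewrite v0 /dotv big1 ?ltxx // => k _; rewrite mxE mulr0.
    by have := hP v1 v1nz; rewrite /cnt Pe (_ : [set _ in set0 | _] = set0) ?cards0 //;
       apply/setP => i; rewrite !inE.
  have := hP v vnz; rewrite /cnt (_ : [set _ in P | _] = set0) ?cards0 //.
  apply/setP => i; rewrite !inE; apply/negP => /andP[iP h].
  by have := hv i iP; rewrite ltNge h.
have [T [TP NT Td]] := @extract R d n P w NP.
have hP' : forall v, v != 0 -> (r * d < cnt (P :\: T) w v)%N.
  move=> v vnz; have := hP v vnz.
  have : (cnt P w v <= cnt (P :\: T) w v + cnt T w v)%N.
    rewrite /cnt; apply: leq_trans (leq_card_setU _ _); apply: subset_leq_card; apply/subsetP => i.
    by rewrite !inE; case: (i \in T); case: (i \in P); case: (0 <= _).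
  have h1 := Td v vnz; move=> h2 h3; rewrite mulSn in h3; have h1' : (cnt T w v <= d)%N := h1; lia.
have [g' hg'] := IH _ hP'.
exists (fun i => if i \in T then ord_max else widen_ord (leqnSn _) (g' i)) => j v vnz.
have [->|jm] := eqVneq j ord_max.
  apply: leq_trans (@nnr_good R d n T w v NT) _; apply: cnt_sub; apply/subsetP => i iT.
  by rewrite !inE iT eqxx andbT (subsetP TP).
have jlt : (j < r.+1)%N.
  by move: jm (ltn_ord j); rewrite -val_eqE /= ltnS leq_eqVlt => /negbTE ->.
apply: leq_trans (hg' (Ordinal jlt) v vnz) _; apply: cnt_sub; apply/subsetP => i.
rewrite !inE => /andP[/andP[iT iP] /eqP gi]; rewrite iP /= (negbTE iT).
by rewrite -val_eqE /= gi.
Qed.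

Lemma ray_count_cnt (R : realType) d n (A : 'I_n -> hyperplane R d) P q v :
  ray_count A P q v = cnt P (fun i => wv (A i) q) v.
Proof.
rewrite /ray_count /cnt; apply: eq_card => i; rewrite !inE; congr andb.
by apply/idP/idP => [/asboolP/ray_hitsE|/ray_hitsE/asboolP].
Qed.

Lemma RD_le_n (R : realType) d n (A : 'I_n -> hyperplane R d) P q : (RD A P q <= n)%N.
Proof. by rewrite /RD; elim/big_ind: _ => // [x y hx hy|i _]; rewrite ?geq_min ?hx // -ltnS. Qed.

Lemma bigmin_le (I : eqType) (r : seq I) (P : pred I) (F : I -> nat) j x0 :
  j \in r -> P j -> (\big[minn/x0]_(i <- r | P i) F i <= F j)%N.
Proof.
elim: r => // a r IH; rewrite inE big_cons => /orP[/eqP<-|jr] Pj.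
  by rewrite Pj geq_minl.
by case: (P a); rewrite ?geq_min IH ?orbT.
Qed.

Lemma RD_le (R : realType) d n (A : 'I_n -> hyperplane R d) P q v :
  v != 0 -> (RD A P q <= ray_count A P q v)%N.
Proof.
move=> vnz; have kn : (ray_count A P q v < n.+1)%N.
  by rewrite ltnS /ray_count (leq_trans (max_card _)) ?card_ord.
rewrite /RD; apply: (@bigmin_le _ _ _ (fun k : 'I_n.+1 => nat_of_ord k) (Ordinal kn)); first exact: mem_index_enum.
by apply/asboolP; exists v.
Qed.

Lemma RD_ge1 (R : realType) d n (A : 'I_n -> hyperplane R d) P q :
  (0 < n)%N -> (forall v, v != 0 -> (0 < ray_count A P q v)%N) -> (1 <= RD A P q)%N.
Proof.
move=> n0 h; rewrite /RD; elim/big_ind: _ => // [x y hx hy|i /asboolP [v [vnz <-]]].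
  by rewrite leq_min hx hy.
exact: h.
Qed.

Theorem lemma3p4 (R : realType) (d : nat) (hd : (0 < d)%N) (n : nat)
  (A : 'I_n -> hyperplane R d)
  (hA : forall i, (A i).1 != 0)
  (hdist : forall i j, i != j ->
     exists x : 'rV[R]_d, ~ (on_hp (A i) x <-> on_hp (A j) x))
  (q : 'rV[R]_d) :
  (RD A [set: 'I_n] q)%:R / d%:R <= (HTvD A q)%:R :> R.
Proof.
set k := RD A [set: 'I_n] q.
have [k0|kpos] := posnP k.
  by rewrite k0 mul0r ler0n.
pose w := fun i => wv (A i) q.
set r := (k.-1 %/ d)%N.
have hr : forall v, v != 0 -> (r * d < cnt [set: 'I_n] w v)%N.
  move=> v vnz; rewrite -ray_count_cnt.
  apply: leq_ltn_trans (leq_trunc_div k.-1 d) _.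
  by rewrite prednK // RD_le.
have [g hg] := @greedy R d n hd w r [set: 'I_n] hr.
have kn := @RD_le_n R d n A [set: 'I_n] q.
have rk : (r.+1 <= k)%N.
  have := leq_trunc_div k.-1 d; rewrite -/r.
  have : (r <= r * d)%N by rewrite leq_pmulr.
  lia.
have rn : (r.+1 < n.+1)%N by rewrite ltnS (leq_trans rk kn).
have n0 : (0 < n)%N by lia.
have hH : (r.+1 <= HTvD A q)%N.
  rewrite /HTvD; apply: (@leq_bigmax_cond _ _ _ (Ordinal rn)).
  apply/asboolP; exists g => j; apply: RD_ge1 => // v vnz.
  by rewrite ray_count_cnt -[[set i | g i == j]]setTI; apply: hg.
have kd : (k <= r.+1 * d)%N.
  by have := ltn_ceil k.-1 hd; rewrite -/r prednK.
rewrite ler_pdivrMr ?ltr0n // -natrM ler_nat.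
apply: leq_trans kd _; rewrite leq_mul2r hH orbT //.
Qed.
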